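(* Let $G$ be a finite group, $q$ a prime, $Q$ a normal $q$-subgroup of $G$, $A$ a $q'$-subgroup of $G$, $\chi\in\mathrm{Irr}(Q)$ and $T=(G,Q,\chi)$. Then there exists a chain $T=T_0,T_1,\dots,T_n$ of triples, each $T_i$ a direct linear reduction of $T_{i-1}$ and $T_n$ a linear limit of $T$, such that for every $i=0,1,\dots,n$ the central character $\zeta^{(T_i)}$ of $T_i$ is $A(\chi)$-invariant.
   Context: $\mathrm{Irr}(X)$, $\mathrm{Lin}(X)$: complex irreducible, resp. linear, characters of $X$; $K(\phi)$ is the stabilizer of $\phi$ in $K$. A triple is $T=(G,N,\psi)$ with $G$ finite, $N\trianglelefteq G$, $\psi\in\mathrm{Irr}(N)$. The center $Z(T)$ is the center $Z(\psi^G)=\{g\in G:|\psi^G(g)|=\psi^G(1)\}$ of $\psi^G$, and the central character $\zeta^{(T)}$ is the unique linear character of $Z(T)$ lying under $\psi^G$. If $L\trianglelefteq G$, $L\le N$, and $\lambda\in\mathrm{Lin}(L)$ lies under $\psi$, the direct linear reduction $T(\lambda)$ is $(G(\lambda),N(\lambda),\psi_\lambda)$, with $\psi_\lambda$ the $\lambda$-Clifford correspondent of $\psi$ (unique irreducible character of $N(\lambda)$ over $\lambda$ inducing $\psi$); it is proper if $T(\lambda)\neq T$. A linear reduction is obtained by a finite chain of direct linear reductions; a linear limit is a linear reduction admitting no proper direct linear reduction. *)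

(* Defs.v *)
From HB Require Import structures.
From mathcomp Require Import all_boot all_order all_algebra all_fingroup all_solvable all_field all_character.
Set Implicit Arguments. Unset Strict Implicit. Unset Printing Implicit Defensive.
Import GRing.Theory Num.Theory.
Local Open Scope group_scope.
Local Open Scope ring_scope.

Section Triples.
Variable gT : finGroupType.

Record triple := Triple { tG : {group gT}; tN : {group gT}; tpsi : 'CF(tN) }.

Definition is_triple (T : triple) : Prop :=
  tN T <| tG T /\ tpsi T \in irr (tN T).

Definition triple_eq (T T' : triple) : Prop :=
  [/\ (tG T :=: tG T')%g, (tN T :=: tN T')%g & forall x, tpsi T x = tpsi T' x].

Definition tcenter (T : triple) : {group gT} :=
  [group of ('Z('Ind[tG T] (tpsi T)))%CF].

Definition is_central_char (T : triple) (lam : 'CF(tcenter T)) : Prop :=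
  lam \is a linear_char /\ '['Res[tcenter T] ('Ind[tG T] (tpsi T)), lam] != 0.

(* T' is a direct linear reduction T(lam) of T, for some L <| G, L <= N,
   lam in Lin(L) lying under psi: T' = (G(lam), N(lam), psi_lam), where
   psi_lam is the (unique) irreducible character of N(lam) lying over lam
   and inducing psi. *)
Definition direct_lin_red (T T' : triple) : Prop :=
  exists (L : {group gT}) (lam : 'CF(L)),
    [/\ (L <| tG T)%g, (L \subset tN T)%g, lam \is a linear_char,
        '['Res[L] (tpsi T), lam] != 0 &
        [/\ (tG T' :=: tG T :&: 'I[lam])%g, (tN T' :=: tN T :&: 'I[lam])%g,
            tpsi T' \in irr (tN T'),
            '['Res[L] (tpsi T'), lam] != 0 &
            'Ind[tN T] (tpsi T') = tpsi T]].

Inductive lin_red (T : triple) : triple -> Prop :=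
  | lin_red_refl : lin_red T T
  | lin_red_step T1 T2 : lin_red T T1 -> direct_lin_red T1 T2 -> lin_red T T2.

Definition linear_limit (T T' : triple) : Prop :=
  lin_red T T' /\
  ~ (exists T'' : triple, direct_lin_red T' T'' /\ ~ triple_eq T'' T').

End Triples.

(* Main.v *)
Require Import Defs.
From mathcomp Require Import all_boot all_order all_algebra all_fingroup all_solvable all_field all_character.
Set Implicit Arguments. Unset Strict Implicit. Unset Printing Implicit Defensive.
Import GRing.Theory Num.Theory.
Local Open Scope group_scope.
Local Close Scope ring_scope.
Lemma glaub_grp (gT : finGroupType) (N B I : {group gT}) (q : nat) :
  q.-group N -> q^'.-group B -> B \subset 'N(N) -> I \subset N * B ->
  (forall b, b \in B -> exists2 y, y \in N & b * y^-1 \in I) ->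
  exists2 x, x \in N & B :^ x \subset I.
Proof.
move=> qN qB nNB sINB hB.
have coNB : coprime #|N| #|B| by apply: (pnat_coprime qN qB).
have sNBIN : N * B \subset I * N.
  rewrite -(normC nNB); apply/subsetP=> z /mulsgP[b n Bb Nn ->].
  have [y Ny Iby] := hB b Bb.
  by rewrite -(mulgKV y b) -mulgA mem_mulg // groupM.
have sIN_NB : I * N \subset N * B.
  have eNB : N * B = N <*> B by rewrite (norm_joinEr nNB).
  rewrite eNB; apply: mul_subG; [by move: sINB; rewrite eNB | exact: joing_subl].
have eIN : #|I * N| = (#|N| * #|B|)%N.
  rewrite -TI_cardMg ?coprime_TIg // (_ : I * N = N * B) //.
  by apply/eqP; rewrite eqEsubset sIN_NB.
pose M := (N :&: I)%G.
have sMI : M \subset I by exact: subsetIr.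
have oI : #|I| = (#|B| * #|M|)%N.
  have := mul_cardG I N; rewrite eIN setIC => h.
  apply/eqP; rewrite -(eqn_pmul2r (cardG_gt0 N)) h mulnAC mulnC mulnA.
  by rewrite [in X in _ == X]mulnAC.

have iIM : #|I : M| = #|B|.
  by rewrite -divgS // oI mulnK.
have qM : q.-group M by apply: pgroupS qN; exact: subsetIl.
have hallM : Hall I M.
  by rewrite /Hall sMI iIM (pnat_coprime qM qB).
have nsMI : M <| I.
  have nsN : N <| N <*> B by rewrite normalYl.
  rewrite /M /= setIC; apply: normalGI nsN.
  have sINB' : I \subset N <*> B by rewrite (norm_joinEr nNB).
  exact: sINB'.
have /splitsP[C /complP[tiMC eMC]] := SchurZassenhaus_split hallM nsMI.
have oC : #|C| = #|B|.
  apply/eqP; rewrite -(eqn_pmul2l (cardG_gt0 M)) -TI_cardMg // eMC oI mulnC.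
  by [].
have sCNB : C \subset N * B.
  apply: subset_trans sINB; rewrite -eMC; exact: mulG_subr.
have [x Nx eC] := SchurZassenhaus_trans_sol (pgroup_sol qN) nNB sCNB coNB oC.
exists x => //; rewrite -eC -eMC; exact: mulG_subr.
Qed.
Local Open Scope ring_scope.

Lemma conj_constt (gT : finGroupType) (N L : {group gT}) (t k : Iirr L) (r : Iirr N) :
  L <| N -> '['Res[L] 'chi_r, 'chi_t] != 0 -> '['Res[L] 'chi_r, 'chi_k] != 0 ->
  exists2 y, y \in N & ('chi_t ^ y)%CF = 'chi_k.
Proof.
move=> nsLN nzt nzk.
have rt : r \in irr_constt ('Ind[N] 'chi_t) by rewrite constt_Ind_Res irr_consttE.
have : k \in irr_constt ('Res[L] ('Ind[N] 'chi_t)).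
  apply: (constt_Res_trans _ rt); first by rewrite cfInd_char ?irr_char.
  by rewrite irr_consttE.
rewrite irr_consttE => nz.
have /exists_inP[y Ny nzy] : [exists y in N, '['chi_t ^ y, 'chi_k]%CF != 0].
  rewrite -negb_forall_in; apply: contra nz => /forall_inP H1.
  rewrite cfResInd // cfdotZl cfdot_suml big1 ?mulr0 // => y Ny.
  exact/eqP/H1.
exists y => //; move: nzy; rewrite -conjg_IirrE cfdot_irr pnatr_eq0.
by case: (conjg_Iirr t y =P k) => [-> | ].

Qed.


Lemma glaub_chr (gT : finGroupType) (H N L B : {group gT}) (q : nat) (t : Iirr L) (psi : 'CF(N)) :
  N <| H -> L <| H -> L \subset N -> q.-group N -> q^'.-group B -> B \subset H ->
  B \subset 'I[psi] -> psi \in irr N -> '['Res[L] psi, 'chi_t] != 0 ->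
  exists2 x, x \in N & B \subset 'I['chi_t ^ x]%CF.
Proof.
move=> nsNH nsLH sLN qN qB sBH IBpsi irrpsi nzt.
have [sNH nNH] := andP nsNH; have [sLH nLH] := andP nsLH.
have nsLN : L <| N by rewrite (normalS sLN sNH nsLH).
have nNB : B \subset 'N(N) := subset_trans sBH nNH.
have nLB : B \subset 'N(L) := subset_trans sBH nLH.
pose I := ((N <*> B) :&: 'I['chi_t])%G.
have sINB : I \subset (N * B)%g by rewrite -(norm_joinEr nNB) subsetIl.
have [r Dr] := irrP irrpsi.
have hB : forall b, b \in B -> exists2 y, y \in N & (b * y^-1)%g \in I.
  move=> b Bb.
  have nLb := subsetP nLB b Bb; have nNb := subsetP nNB b Bb.
  have nzk : '['Res[L] 'chi_r, 'chi_(conjg_Iirr t b)] != 0.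
    rewrite conjg_IirrE -Dr.
    have -> : 'Res[L] psi = ('Res[L] psi ^ b)%CF.
      by rewrite cfConjgRes_norm // inertiaJ ?(subsetP IBpsi).
    by rewrite cfConjg_iso.
  have nzt' : '['Res[L] 'chi_r, 'chi_t] != 0 by rewrite -Dr.
  have [y Ny Ey] := conj_constt nsLN nzt' nzk.
  have nLy := subsetP (normal_norm nsLN) y Ny.
  exists y => //; apply/setIP; split.
    apply: groupM; first exact: (subsetP (joing_subr N B)).
    by rewrite groupV; exact: (subsetP (joing_subl N B)).
  rewrite inE groupM ?groupV //= cfConjgMnorm ?groupV // -conjg_IirrE -Ey.
  by rewrite cfConjgK.
have [x Nx sBxI] := glaub_grp qN qB nNB sINB hB.
have nLx := subsetP (normal_norm nsLN) x Nx.
exists x^-1%g; first by rewrite groupV.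
rewrite -conjg_inertia ?groupV // -sub_conjg.
exact: subset_trans sBxI (subsetIr _ _).
Qed.

From Stdlib Require Import Classical_Prop.

Definition Inv (gT : finGroupType) (Q B : {set gT}) (T : triple gT) : Prop :=
  [/\ (tN T <| tG T)%g, (tN T \subset Q)%g, tpsi T \in irr (tN T),
      (B \subset tG T)%g & (B \subset 'I[tpsi T])%g].

Lemma step (gT : finGroupType) (Q B : {group gT}) (q : nat) (T : triple gT)
    (L : {group gT}) (lam : 'CF(L)) :
  q.-group Q -> q^'.-group B -> Inv Q B T -> (L <| tG T)%g -> (L \subset tN T)%g ->
  lam \is a linear_char -> '['Res[L] (tpsi T), lam] != 0 ->
  ~~ (tG T \subset 'I[lam])%g ->
  exists T', [/\ direct_lin_red T T', Inv Q B T' & (#|tG T'| < #|tG T|)%N].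
Proof.
case: T => H N psi /= qQ qB [/= nsNH sNQ irrpsi sBH IBpsi] nsLH sLN linlam nzlam nIH.
have [sNH nNH] := andP nsNH; have [sLH nLH] := andP nsLH.
have nsLN : L <| N by rewrite (normalS sLN sNH nsLH).
have qN : q.-group N := pgroupS sNQ qQ.
have [t Dt] := irrP (lin_char_irr linlam); subst lam.
have [x Nx IBx] := glaub_chr nsNH nsLH sLN qN qB sBH IBpsi irrpsi nzlam.
have nLx := subsetP (normal_norm nsLN) x Nx.
pose u := conjg_Iirr t x.
have Eu : 'chi_u = ('chi_t ^ x)%CF by rewrite conjg_IirrE.
have nzu : '['Res[L] psi, 'chi_u] != 0 by rewrite Eu cfdot_Res_conjg.
have linu : 'chi_u \is a linear_char by rewrite Eu cfConjg_lin_char.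
have nIHu : ~~ (H \subset 'I['chi_u]).
  rewrite Eu -conjg_inertia //; apply: contra nIH.
  rewrite -sub_conjgV conjGid // groupV; exact: (subsetP sNH).
have [r Dr] := irrP irrpsi; subst psi.
have [_ injA imA _ _] := constt_Inertia_bijection u nsLN.
have rB : r \in irr_constt ('Ind[N] 'chi_u) by rewrite constt_Ind_Res irr_consttE.
have := imA r; rewrite rB => /imsetP[s As Drs].
have [irrsN _ _ _ _] := constt_Inertia_bijection u nsLN.
have Ds : 'Ind[N] 'chi_s = 'chi_r by rewrite Drs /Ind_Iirr cfIirrE // irrsN.
have nzs : '['Res[L] 'chi_s, 'chi_u] != 0 by rewrite -irr_consttE -constt_Ind_Res.
exists (@Triple gT (H :&: 'I['chi_u])%G ('I_N['chi_u])%G 'chi_s).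
split => /=.
- exists L, 'chi_u; split => //; split => //=; by rewrite ?mem_irr ?Ds.
- split => //=.
  + have -> : N :&: 'I['chi_u] = (H :&: 'I['chi_u]) :&: N.
      by rewrite setIAC (setIidPr sNH).
    by apply: normalGI nsNH; exact: subsetIl.
  + exact: subset_trans (subsetIl _ _) sNQ.
  + exact: mem_irr.
  + by rewrite subsetI sBH Eu.
  + apply/subsetP=> b Bb.
    have Hb := subsetP sBH b Bb; have Iub := subsetP IBx b Bb.
    rewrite -Eu in Iub.
    have nNb := subsetP nNH b Hb.
    have nTb : b \in 'N(N :&: 'I['chi_u]).
      have : [set b] \subset 'N(N :&: 'I['chi_u]).
        by apply: normsI; rewrite sub1set // (subsetP (normG _)).
      by rewrite sub1set.
    have nLb := subsetP nLH b Hb.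
    have As' : conjg_Iirr s b \in irr_constt ('Ind['I_N['chi_u]] 'chi_u).
      rewrite constt_Ind_Res irr_consttE conjg_IirrE -cfConjgRes_norm //.
      have E : ('chi_u ^ b)%CF = 'chi_u := inertiaJ Iub.
      have -> : '[('Res[L] 'chi_s ^ b)%CF, 'chi_u] = '[('Res[L] 'chi_s ^ b)%CF, ('chi_u ^ b)%CF].
        by rewrite E.
      by rewrite cfConjg_iso.
    have : Ind_Iirr N (conjg_Iirr s b) = Ind_Iirr N s.
      rewrite /Ind_Iirr conjg_IirrE -cfConjgInd_norm // Ds.
      by rewrite (inertiaJ (subsetP IBpsi b Bb)).
    move/(injA _ _ As' As) => Es.
    by rewrite inE nTb /= -conjg_IirrE Es.
- rewrite proper_card // properE subsetIl /= subsetI subxx /=; exact: nIHu.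
Qed.

Lemma proper_red (gT : finGroupType) (Q B : {group gT}) (T T'' : triple gT) :
  Inv Q B T -> direct_lin_red T T'' -> ~ triple_eq T'' T ->
  exists L : {group gT}, exists lam : 'CF(L),
    [/\ (L <| tG T)%g, (L \subset tN T)%g, lam \is a linear_char,
        '['Res[L] (tpsi T), lam] != 0 & ~~ (tG T \subset 'I[lam])%g].
Proof.
move=> [nsNH _ _ _ _] [L [lam [nsLH sLN linlam nzlam [eG eN irr'' nz'' eInd]]]] neq.
exists L, lam; split => //; apply/negP => sHI; apply: neq.
move: eG eN irr'' nz'' eInd; case: T'' => G'' N'' psi'' /= eG eN _ _ eInd.
have sNH := normal_sub nsNH.
have eN' : N'' = tN T.
  apply: group_inj; rewrite eN; apply/setIidPl; exact: subset_trans sNH sHI.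
subst N''; split => //.
- by rewrite eG; apply/setIidPl.
- by move=> x; rewrite -eInd cfInd_id.
Qed.

Lemma chain_exists (gT : finGroupType) (Q B : {group gT}) (q : nat) :
  q.-group Q -> q^'.-group B -> forall T : triple gT, Inv Q B T ->
  exists n (Ts : nat -> triple gT),
    [/\ Ts 0%N = T, (forall i, (i < n)%N -> direct_lin_red (Ts i) (Ts i.+1)),
        (forall i, (i <= n)%N -> Inv Q B (Ts i)) &
        ~ (exists T'', direct_lin_red (Ts n) T'' /\ ~ triple_eq T'' (Ts n))].
Proof.
move=> qQ qB T; have [m] := ubnP #|tG T|; elim: m T => // m IHm T ltm invT.
case: (classic (exists T'', direct_lin_red T T'' /\ ~ triple_eq T'' T)) => [[T'' [red neq]] | nex].
  have [L [lam [nsLH sLN linlam nzlam nIH]]] := proper_red invT red neq.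
  have [T' [red' inv' lt']] := step qQ qB invT nsLH sLN linlam nzlam nIH.
  have [|n [Ts [Ts0 steps invs lim]]] := IHm T' _ inv'.
    by apply: leq_trans lt' _; rewrite -ltnS.
  exists n.+1, (fun i => if i is j.+1 then Ts j else T); split => //.
  - by case=> [|i] /=; [rewrite Ts0 | move=> lt; apply: steps].
  - by case=> [|i] //=; move=> lt; apply: invs.
exists 0%N, (fun _ => T); split => //.
Qed.

Lemma chain_lin_red (gT : finGroupType) (n : nat) (Ts : nat -> triple gT) :
  (forall i, (i < n)%N -> direct_lin_red (Ts i) (Ts i.+1)) ->
  forall k, (k <= n)%N -> lin_red (Ts 0%N) (Ts k).
Proof.
move=> steps; elim=> [|k IHk] lt; first exact: lin_red_refl.
apply: lin_red_step (IHk (ltnW lt)) _; exact: steps.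
Qed.

Lemma central_inv (gT : finGroupType) (Q B : {group gT}) (T : triple gT) :
  Inv Q B T ->
  (exists lam : 'CF(tcenter T), is_central_char lam) /\
  forall lam : 'CF(tcenter T), is_central_char lam -> (B \subset 'I[lam])%g.
Proof.
case: T => H N psi [/= nsNH _ irrpsi sBH _].
rewrite /is_central_char /tcenter /=.
set Phi := 'Ind[H] psi.
have NPhi : Phi \is a character by rewrite cfInd_char ?irrWchar.
have nzPhi : Phi 1%g != 0.
  rewrite char1_eq0 // cfInd_eq0 ?irrWchar ?normal_sub //.
  by case/irrP: irrpsi => r ->; exact: irr_neq0.
have [mu linmu Dmu] := cfcenter_Res Phi.
have irrmu := lin_char_irr linmu.
have nzmu : '['Res['Z(Phi)%CF] Phi, mu] != 0.
  rewrite Dmu cfdotZl; case/irrP: irrmu => k ->; rewrite cfnorm_irr mulr1 //.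
have uniq : forall lam : 'CF('Z(Phi)%CF), lam \is a linear_char ->
    '['Res['Z(Phi)%CF] Phi, lam] != 0 -> lam = mu.
  move=> lam linlam; rewrite Dmu cfdotZl mulf_eq0 negb_or => /andP[_].
  case/irrP: irrmu => k Dk; case/irrP: (lin_char_irr linlam) => j Dj.
  by rewrite Dk Dj cfdot_irr pnatr_eq0; case: (k =P j) => // ->.
split; first by exists mu.
move=> lam [linlam nzlam]; rewrite (uniq lam linlam nzlam).
have [sZH nZH] := andP (cfcenter_normal Phi).
apply/subsetP=> b Bb; have Hb := subsetP sBH b Bb.
rewrite inE (subsetP nZH) //=; apply/eqP.
have : ('Res['Z(Phi)%CF] Phi ^ b)%CF = 'Res['Z(Phi)%CF] Phi.
  by rewrite cfConjgRes_norm ?(subsetP nZH) ?(subsetP (normG H)) // cfConjg_id.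
rewrite Dmu linearZ /=; exact: scalerI.
Qed.

Unset Implicit Arguments.
Local Open Scope group_scope.
Local Open Scope ring_scope.

Theorem proposition6p4 (gT : finGroupType) (G Q A : {group gT}) (q : nat)
    (chi : 'CF(Q)) :
  prime q -> Q <| G -> q.-group Q -> A \subset G -> q^'.-group A ->
  chi \in irr Q ->
  exists (n : nat) (Ts : nat -> triple gT),
    [/\ Ts 0%N = @Triple gT G Q chi,
        (forall i, (i < n)%N -> direct_lin_red (Ts i) (Ts i.+1)),
        linear_limit (@Triple gT G Q chi) (Ts n) &
        forall i, (i <= n)%N ->
          (exists lam : 'CF(tcenter (Ts i)), is_central_char lam) /\
          forall lam : 'CF(tcenter (Ts i)),
            is_central_char lam -> 'I_A[chi] \subset 'I[lam]].
Proof.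
move=> prq nsQG qQ sAG qA irrchi.
pose B := (A :&: 'I[chi])%G.
have qB : q^'.-group B by apply: pgroupS qA; exact: subsetIl.
have inv0 : Inv Q B (@Triple gT G Q chi).
  split => //=; [exact: subset_trans (subsetIl _ _) sAG | exact: subsetIr].
have [n [Ts [Ts0 steps invs lim]]] := chain_exists qQ qB inv0.
exists n, Ts; split => //.
- split => //; rewrite -Ts0; exact: chain_lin_red steps n (leqnn n).
- move=> i lei; exact: central_inv (invs i lei).
Qed.
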